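(* For $r=1,\dots,N$, $$Z_r=\sum_{\substack{\mu\subseteq\lambda\\|\mu|=r}}\ \sum_{\nu\subseteq\mu}\left[\left(\prod_{i=1}^n(1-i)^{\mu_i-\nu_i}\binom{\lambda_i-\nu_i}{\lambda_i-\mu_i}\right)\times\left(\sum_{w\in S_n}\mathrm{sgn}(w)T_{w1,1}^{(\nu_1)}\cdots T_{wn,n}^{(\nu_n)}\right)\right],$$ where for $i=1$ the factor $(1-i)^{\mu_i-\nu_i}$ is interpreted as $1$ if $\nu_1=\mu_1$ and $0$ otherwise.
   Context: $F$ is an algebraically closed field of characteristic zero; $\lambda=(\lambda_1,\dots,\lambda_n)$ is a composition of $N$ with positive parts and $\lambda_1\le\cdots\le\lambda_n$; $\sigma=(s_{i,j})$ with $s_{i,j}:=\lambda_j-\min(\lambda_i,\lambda_j)$. For compositions, $\nu\subseteq\mu$ means $0\le\nu_i\le\mu_i$ for all $i$, and $|\mu|=\sum_i\mu_i$. $Y_n$ is the $F$-algebra with generators $T_{i,j}^{(r)}$ ($1\le i,j\le n$, $r\ge1$) and relations $[T_{i,j}^{(r)},T_{k,l}^{(s)}]=\sum_{t=0}^{\min(r,s)-1}(T_{k,j}^{(t)}T_{i,l}^{(r+s-1-t)}-T_{k,j}^{(r+s-1-t)}T_{i,l}^{(t)})$, $T_{i,j}^{(0)}=\delta_{i,j}$. With $T(u)=(\sum_rT_{i,j}^{(r)}u^{-r})$ and Gauss factorization $T(u)=F(u)D(u)E(u)$ ($D$ diagonal with entries $D_i(u)=\sum_{r\ge0}D_i^{(r)}u^{-r}$,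 $E$ upper unitriangular with entries $E_{i,j}(u)=\sum_{r\ge1}E_{i,j}^{(r)}u^{-r}$, $F$ lower unitriangular with $(j,i)$-entries $F_{i,j}(u)=\sum_{r\ge1}F_{i,j}^{(r)}u^{-r}$), $Y_n(\sigma)\subseteq Y_n$ is the subalgebra generated by $D_i^{(r)}$ ($r>0$), $E_i^{(r)}:=E_{i,i+1}^{(r)}$ ($r>s_{i,i+1}$), $F_i^{(r)}:=F_{i,i+1}^{(r)}$ ($r>s_{i+1,i}$). Define ${}^\sigma E_{i,i+1}^{(r)}=E_i^{(r)}$, ${}^\sigma E_{i,j}^{(r)}=[{}^\sigma E_{i,j-1}^{(r-s_{j-1,j})},E_{j-1}^{(s_{j-1,j}+1)}]$ ($r>s_{i,j}$), ${}^\sigma F_{i,i+1}^{(r)}=F_i^{(r)}$, ${}^\sigma F_{i,j}^{(r)}=[F_{j-1}^{(s_{j,j-1}+1)},{}^\sigma F_{i,j-1}^{(r-s_{j,j-1})}]$ ($r>s_{j,i}$), ${}^\sigma E_{i,j}(u)=\sum_{r>s_{i,j}}{}^\sigma E_{i,j}^{(r)}u^{-r}$, ${}^\sigma F_{i,j}(u)=\sum_{r>s_{j,i}}{}^\sigma F_{i,j}^{(r)}u^{-r}$, ${}^\sigma E_{i,i}={}^\sigma F_{i,i}=1$, and ${}^\sigma T_{i,j}(u)=\sum_r{}^\sigma T_{i,j}^{(r)}u^{-r}:=\sum_{k=1}^{\min(i,j)}{}^\sigma F_{k,i}(u)D_k(u){}^\sigma E_{k,j}(u)$. $W(\lambda)$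 is the quotient of $Y_n(\sigma)$ by the two-sided ideal generated by $\{D_1^{(r)}:r>\lambda_1\}$, and $T_{i,j}^{(r)}$ denotes the image of ${}^\sigma T_{i,j}^{(r)}$ in $W(\lambda)$ (so $T_{i,j}^{(0)}=\delta_{i,j}$). It is known that $T_{i,j}^{(r)}=0$ in $W(\lambda)$ for $r>\lambda_j$, so with $T_{i,j}(u)=\sum_rT_{i,j}^{(r)}u^{-r}$ the polynomial $Z(u):=\mathrm{cdet}\big((u-j+1)^{\lambda_j}T_{i,j}(u-j+1)\big)_{1\le i,j\le n}\in W(\lambda)[u]$ is well defined, where $\mathrm{cdet}(a_{i,j}):=\sum_{w\in S_n}\mathrm{sgn}(w)a_{w1,1}\cdots a_{wn,n}$; write $Z(u)=u^N+Z_1u^{N-1}+\cdots+Z_N$. *)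

(* Defs.v *)
From HB Require Import structures.
From mathcomp Require Import all_boot all_order all_algebra all_fingroup.
Set Implicit Arguments. Unset Strict Implicit. Unset Printing Implicit Defensive.
Import GRing.Theory.
Local Open Scope ring_scope.

(* Indices are 0-based: the paper's index i corresponds to (i : 'I_n) with
   paper value i+1.  Thus the paper's shift u - j + 1 becomes u - j here,
   and the paper's factor (1 - i) becomes - i here. *)

Definition cdet (R : nzRingType) (n : nat) (a : 'I_n -> 'I_n -> R) : R :=
  \sum_(w : 'S_n) (-1) ^+ odd_perm w * \prod_(j < n) a (w j) j.

(* (u-j+1)^{lambda_j} T_{ij}(u-j+1) as a polynomial in u, using
   T_{ij}(u) = sum_{r=0}^{lambda_j} T_{ij}^{(r)} u^{-r}. *)
Definition Zentry (A : nzRingType) (n : nat) (lam : 'I_n -> nat)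
    (T : 'I_n -> 'I_n -> nat -> A) (i j : 'I_n) : {poly A} :=
  \sum_(r < (lam j).+1)
     (T i j r)%:P * ('X - ((j : nat)%:R)%:P) ^+ (lam j - r).

Definition Zpoly (A : nzRingType) (n : nat) (lam : 'I_n -> nat)
    (T : 'I_n -> 'I_n -> nat -> A) : {poly A} :=
  cdet (Zentry lam T).

Definition Zcoef (n : nat) (lam mu nu : 'I_n -> nat) : int :=
  \prod_(i < n)
    ((if (i : nat) == 0%N then (mu i == nu i)%:R
      else (- ((i : nat)%:Z)) ^+ (mu i - nu i)) *
     ('C(lam i - nu i, lam i - mu i))%:R).

(* Main.v *)
Require Import Defs.
From HB Require Import structures.
From mathcomp Require Import all_boot all_order all_algebra all_fingroup.
From mathcomp Require Import zify.
Notation andP := ssrbool.andP.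
Import GRing.Theory.
Local Open Scope ring_scope.

Lemma reidx (V : nmodType) (M L v : nat) (G : nat -> V) : (v <= L)%N -> (L <= M)%N ->
  \sum_(i < (L - v).+1) G (i + v)%N = \sum_(m < M.+1 | (v <= m <= L)%N) G m.
Proof.
move=> vL LM.
rewrite -(big_mkord xpredT (fun i => G (i + v)%N)) /=.
have -> : ((L - v).+1 = L.+1 - v)%N by rewrite subSn.
rewrite -(big_addn 0 L.+1 v xpredT) /= add0n.
rewrite -(big_mkord (fun m => (v <= m <= L)%N)).
rewrite [RHS](big_cat_nat (n:=v)) /=; [|lia|lia].
rewrite [X in _ + X](big_cat_nat (n:=L.+1)) /=; [|lia|lia].
rewrite [X in _ = X + _]big_nat_cond [X in _ = X + _]big1 ?add0r; last by move=> i; case/andP=> /andP[? ?] /andP[? ?]; lia.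
rewrite [X in _ = _ + X]big_nat_cond [X in _ = _ + X]big1 ?addr0; last by move=> i; case/andP=> /andP[? ?] /andP[? ?]; lia.
rewrite [LHS]big_nat_cond [RHS]big_nat_cond; apply: eq_bigl => i /=.
lia.
Qed.

Definition kc {n : nat} (lam : 'I_n -> nat) (j : 'I_n) (m v : nat) : int :=
  (if (j : nat) == 0%N then (m == v)%:R else (- ((j : nat)%:Z)) ^+ (m - v)) *
  ('C(lam j - v, lam j - m))%:R.

Lemma kc_val (A : nzRingType) n (lam : 'I_n -> nat) j m v : (v <= m)%N -> (m <= lam j)%N ->
  (kc lam j m v)%:~R = (- ((j : nat)%:R : A)) ^+ (m - v) *+ 'C(lam j - v, m - v).
Proof.
move=> vm mL; rewrite /kc intrM.
have -> : (lam j - m = (lam j - v) - (m - v))%N by lia.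
rewrite bin_sub; last by lia.
rewrite -[in RHS]mulr_natr; congr (_ * _); last by rewrite pmulrn mulrz_nat.
case: eqP => [j0|jn0].
  rewrite j0 oppr0 expr0n.
  have -> : (m - v == 0)%N = (m == v) by apply/idP/idP; lia.
  by case: (m == v).
by rewrite rmorphXn rmorphN.
Qed.

Lemma Zentry_exp (A : nzRingType) n (lam : 'I_n -> nat) (T : 'I_n -> 'I_n -> nat -> A) i j M :
  (lam j <= M)%N ->
  Zentry lam T i j = \sum_(m < M.+1)
    (\sum_(v < M.+1 | (v <= m <= lam j)%N) T i j v * (kc lam j m v)%:~R)%:P * 'X^(lam j - m).
Proof.
move=> LM; rewrite /Zentry.
set L := lam j.
pose G (r m : nat) := (T i j r * (kc lam j m r)%:~R)%:P * 'X^(L - m).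
have step : forall r : 'I_L.+1, (T i j r)%:P * ('X - ((j : nat)%:R)%:P) ^+ (L - r) =
   \sum_(m < M.+1 | (r <= m <= L)%N) G r m.
  move=> r; have rL : (r <= L)%N by rewrite -ltnS.
  rewrite -(@reidx _ M L r (G r) rL LM) -polyCN exprDn_comm; last exact: commr_sym (commr_polyX _).
  rewrite mulr_sumr; apply: eq_bigr => k _.
  have kk := ltn_ord k; rewrite /G kc_val; [|lia|rewrite -/L; lia].
  have -> : (k + r - r = k)%N by lia.
  have -> : (L - (k + r) = L - r - k)%N by lia.
  rewrite -polyC_exp -mulrnAr -polyCMn -(commr_polyXn _ (L - r - k)) mulrA -polyCM.
  done.
rewrite (eq_bigr _ (fun r _ => step r)) (big_ord_widen M.+1 (fun r => \sum_(m < M.+1 | (r <= m <= L)%N) G r m)) //.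
transitivity (\sum_(r < M.+1) \sum_(m < M.+1) (if (r <= m <= L)%N then G r m else 0)).
  rewrite big_mkcond /=; apply: eq_bigr => r _; case: ifP => rL.
    by rewrite big_mkcond.
  by rewrite big1 // => m _; case: ifP => //; lia.
rewrite exchange_big; apply: eq_bigr => m _ /=.
rewrite rmorph_sum mulr_suml [RHS]big_mkcond; apply: eq_bigr => v _ /=.
by case: ifP.
Qed.

Lemma prod_CX (A : nzRingType) (I : Type) (s : seq I) (c : I -> A) (e : I -> nat) :
  \prod_(x <- s) ((c x)%:P * 'X^(e x)) = (\prod_(x <- s) c x)%:P * 'X^(\sum_(x <- s) e x)%N.
Proof.
elim: s => [|a s IH]; first by rewrite !big_nil mulr1.
rewrite !big_cons IH exprD polyCM -!mulrA; congr (_ * _).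
by rewrite !mulrA (commr_polyXn _ (e a)).
Qed.

Lemma prod0 (R : pzSemiRingType) (I : eqType) (s : seq I) (F : I -> R) x :
  x \in s -> F x = 0 -> \prod_(y <- s) F y = 0.
Proof.
move=> + Fx; elim: s => [|a s IH] //; rewrite big_cons in_cons.
case: eqP => [<- _|_ /= xs]; first by rewrite Fx mul0r.
by rewrite IH // mulr0.
Qed.

Lemma prod_Tk (A : nzRingType) (I : Type) (s : seq I) (a : I -> A) (k : I -> int) :
  \prod_(x <- s) (a x * (k x)%:~R) = (\prod_(x <- s) k x)%:~R * \prod_(x <- s) a x.
Proof.
elim: s => [|y s IH]; first by rewrite !big_nil mulr1.
rewrite !big_cons IH intrM !mulrA (commr_int (a y) (k y)) -(mulrA _ (a y)) (commr_int (a y)).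
by rewrite !mulrA.
Qed.

Lemma coef_sign (A : nzRingType) (b : bool) (p : {poly A}) k :
  ((-1) ^+ b * p)`_k = (-1) ^+ b * p`_k.
Proof. by case: b; rewrite ?expr0 ?expr1 ?mul1r ?mulN1r ?coefN. Qed.

Theorem lemma3p5 (A : nzRingType) (n : nat) (lam : 'I_n -> nat)
  (lam_pos : forall i, (0 < lam i)%N)
  (lam_sorted : forall i j : 'I_n, (i <= j)%N -> (lam i <= lam j)%N)
  (T : 'I_n -> 'I_n -> nat -> A)
  (T0 : forall i j, T i j 0%N = (i == j)%:R)
  (Tvanish : forall i j r, (lam j < r)%N -> T i j r = 0)
  (r : nat) :
  let N := (\sum_(i < n) lam i)%N in
  (1 <= r <= N)%N ->
  (Zpoly lam T)`_(N - r) =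
  \sum_(mu : {ffun 'I_n -> 'I_N.+1}
          | [forall i, (mu i <= lam i)%N] && ((\sum_(i < n) mu i)%N == r))
    \sum_(nu : {ffun 'I_n -> 'I_N.+1} | [forall i, (nu i <= mu i)%N])
      (Zcoef lam (fun i => mu i : nat) (fun i => nu i : nat))%:~R *
      cdet (fun i j => T i j (nu j)).
Proof.
move=> N /andP[r1 rN].
have lamN : forall j, (lam j <= N)%N.
  by move=> j; rewrite /N (bigD1 j) //= leq_addr.
pose c (i j : 'I_n) (m : nat) :=
  \sum_(v < N.+1 | (v <= m <= lam j)%N) T i j v * (kc lam j m v)%:~R.
have Hw : forall w : 'S_n, (\prod_(j < n) Zentry lam T (w j) j)`_(N - r) =
  \sum_(mu : {ffun 'I_n -> 'I_N.+1}
          | [forall i, (mu i <= lam i)%N] && ((\sum_(i < n) mu i)%N == r))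
    \sum_(nu : {ffun 'I_n -> 'I_N.+1} | [forall i, (nu i <= mu i)%N])
      (Zcoef lam (fun i => mu i : nat) (fun i => nu i : nat))%:~R *
      \prod_(j < n) T (w j) j (nu j).
  move=> w.
  rewrite (eq_bigr _ (fun j _ => @Zentry_exp A n lam T (w j) j N (lamN j))).
  rewrite bigA_distr_bigA coef_sum [RHS]big_mkcond; apply: eq_bigr => mu _.
  rewrite prod_CX coefCM coefXn.
  have [Hle|Hnle] := boolP [forall i, (mu i <= lam i)%N]; last first.
    move/forallPn: Hnle => [j Hj].
    rewrite (@prod0 _ _ _ _ j) ?mem_index_enum ?mul0r //.
    by rewrite big1 // => v Hv; exfalso; lia.
  have Hsum : ((\sum_x (lam x - mu x)) + \sum_x mu x = N)%N.
    rewrite -big_split /N; apply: eq_bigr => x _ /=; rewrite subnK //; apply: (forallP Hle).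
  have SN : (\sum_x (mu x : nat) <= N)%N by move: Hsum; clearbody N; lia.
  rewrite /=.
  set S1 := (\sum_(i < n) (mu i : nat))%N in Hsum SN *.
  set S2 := (\sum_(x < n) (lam x - mu x))%N in Hsum *.
  have [Hr|Hr] := eqVneq S1 r; last first.
    have -> : ((N - r)%N == S2) = false.
      by apply/negbTE/eqP; move: Hsum SN rN Hr; clearbody N; lia.
    by rewrite mulr0.
  have -> : ((N - r)%N == S2) = true.
    by apply/eqP; move: Hsum SN rN Hr; clearbody N; lia.
  rewrite mulr1.
  rewrite (eq_bigr (fun x => \sum_(v < N.+1) (if (v <= mu x)%N then T (w x) x v * (kc lam x (mu x) v)%:~R else 0))); last first.
    by move=> x _; rewrite big_mkcond; apply: eq_bigr => v _; rewrite (forallP Hle x) andbT.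
  rewrite bigA_distr_bigA [RHS]big_mkcond; apply: eq_bigr => nu _.
  have [Hnu|Hnu] := boolP [forall i, (nu i <= mu i)%N].
    rewrite (eq_bigr (fun x => T (w x) x (nu x) * (kc lam x (mu x) (nu x))%:~R)); last by move=> x _; rewrite (forallP Hnu x).
    by rewrite prod_Tk.
  by move/forallPn: Hnu => [j Hj]; rewrite (@prod0 _ _ _ _ j) ?mem_index_enum // (negbTE Hj).
rewrite /Zpoly /cdet coef_sum.
under eq_bigr => w _ do rewrite coef_sign Hw mulr_sumr.
rewrite exchange_big; apply: eq_bigr => mu _.
under eq_bigr => w _ do rewrite mulr_sumr.
rewrite exchange_big; apply: eq_bigr => nu _.
rewrite mulr_sumr; apply: eq_bigr => w _.
by rewrite !mulrA (commr_sign _ (odd_perm w)).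
Qed.
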